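(* Let $\gamma_{ab}$ and $h_{ab}$ be real symmetric invertible $2\times2$ matrices (the induced metric and the worldsheet metric at a point), with matrix forms $\Gamma$ and $H$, and let $a_1=\operatorname{tr}(\Gamma H^{-1})=\gamma_{ab}h^{ba}$, $a_2=\operatorname{tr}((\Gamma H^{-1})^2)=\gamma_{ab}h^{bc}\gamma_{cd}h^{da}$, where $h^{ab}$ is the inverse of $h_{ab}$. Let $\mathcal{L}=f(\sqrt{\gamma},a_1,a_2)$ with $f$ continuously differentiable, regarded as a function of $h^{ij}$ (with $\gamma_{ab}$ fixed). If $\partial\mathcal{L}/\partial h^{ij}=0$ for all $i,j$ and $\partial f/\partial a_1\neq0$ there, then $\partial f/\partial a_2\neq0$ and $$h_{ab}=\phi\,\gamma_{ab},\qquad \phi=-2\,\frac{\partial f/\partial a_2}{\partial f/\partial a_1}\Bigg|_{a_1=2\phi^{-1},\ a_2=2\phi^{-2}},$$ and in particular $a_1=2\phi^{-1}$, $a_2=2\phi^{-2}$.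
   Context: $\gamma$ denotes the absolute value of $\det\gamma_{ab}$; $\sqrt\gamma$ does not depend on $h$. The derivative $\partial\mathcal{L}/\partial h^{ij}$ is computed by the chain rule using $\partial a_1/\partial h^{ij}=\gamma_{ji}$ and $\partial a_2/\partial h^{ij}=2\gamma_{ja}h^{ab}\gamma_{bi}$. *)

(* Defs.v *)
From HB Require Import structures.
From mathcomp Require Import all_boot all_order all_algebra.
From mathcomp Require Import all_classical all_reals all_analysis.
Set Implicit Arguments. Unset Strict Implicit. Unset Printing Implicit Defensive.
Import Order.TTheory GRing.Theory Num.Theory.
Import numFieldNormedType.Exports.
Local Open Scope ring_scope.

(* Gam = gamma_{ab} (induced metric), X = h^{ab} (inverse worldsheet metric) *)
Definition a1_of {R : realType} (Gam X : 'M[R]_2) : R := \tr (Gam *m X).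
Definition a2_of {R : realType} (Gam X : 'M[R]_2) : R :=
  \tr ((Gam *m X) *m (Gam *m X)).
Definition sqrtgam {R : realType} (Gam : 'M[R]_2) : R := Num.sqrt `|\det Gam|.

Definition fargs {R : realType} (Gam X : 'M[R]_2) : 'rV[R]_3 :=
  \row_(k < 3) nth 0 [:: sqrtgam Gam; a1_of Gam X; a2_of Gam X] k.

Definition Lag {R : realType} (f : 'rV[R]_3 -> R) (Gam : 'M[R]_2) :
  'M[R]_2 -> R := fun X => f (fargs Gam X).

(* partial derivative of f with respect to its k-th argument (k = 0,1,2
   for sqrt gamma, a1, a2) *)
Definition pder {R : realType} (f : 'rV[R]_3 -> R) (k : 'I_3) (p : 'rV[R]_3) : R :=
  'D_(delta_mx 0 k) f p.

(* Main.v *)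
Require Import Defs.
From HB Require Import structures.
From mathcomp Require Import all_boot all_order all_algebra.
From mathcomp Require Import all_classical all_reals all_analysis.
Import Order.TTheory GRing.Theory Num.Theory.
Import numFieldNormedType.Exports.
Local Open Scope ring_scope.

Section H.
Variable R : realType.
Implicit Types A X v : 'M[R]_2.

Lemma coord_derive X v i j : 'D_v (fun N : 'M[R]_2 => N i j) X = v i j.
Proof.
have := derive_mx (@derivable_id R _ X v).
rewrite derive_id => /matrixP /(_ i j); rewrite mxE => ->.
by [].
Qed.

Lemma coord_derivable X v i j : derivable (fun N : 'M[R]_2 => N i j) X v.
Proof. exact/diff_derivable/differentiable_coord. Qed.

Lemma ent_fun A i j : (fun X : 'M[R]_2 => (A *m X) i j) =
  \sum_(k < 2) (fun X : 'M[R]_2 => A i k * X k j).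
Proof. by rewrite fct_sumE; apply/funext => X; rewrite mxE. Qed.

Lemma ent_diff A i j X : differentiable (fun X : 'M[R]_2 => (A *m X) i j) X.
Proof.
rewrite ent_fun; apply: differentiable_sum => k.
apply: differentiableM; [exact: differentiable_cst | exact: differentiable_coord].
Qed.

Lemma ent_derive A i j X v : 'D_v (fun X : 'M[R]_2 => (A *m X) i j) X = (A *m v) i j.
Proof.
rewrite ent_fun derive_sum; last first.
  move=> k; apply: derivableM; [exact: derivable_cst|exact: coord_derivable].
rewrite mxE; apply: eq_bigr => k _.
rewrite deriveM; [|exact: derivable_cst|exact: coord_derivable].
by rewrite coord_derive derive_cst scaler0 addr0.
Qed.

Lemma a1_fun Gam : (fun X => a1_of Gam X) =
  \sum_(i < 2) (fun X : 'M[R]_2 => (Gam *m X) i i).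
Proof. by rewrite fct_sumE; apply/funext => X. Qed.

Lemma a2_fun Gam : (fun X => a2_of Gam X) =
  \sum_(i < 2) \sum_(k < 2) ((fun X : 'M[R]_2 => (Gam *m X) i k) *
                            (fun X : 'M[R]_2 => (Gam *m X) k i)).
Proof.
rewrite fct_sumE; apply/funext => X; rewrite /a2_of /mxtrace.
apply: eq_bigr => i _; rewrite fct_sumE mxE; apply: eq_bigr => k _ //.
Qed.

Lemma a1_diff Gam X : differentiable (fun X => a1_of Gam X) X.
Proof. rewrite a1_fun; apply: differentiable_sum => i; exact: ent_diff. Qed.

Lemma a2_diff Gam X : differentiable (fun X => a2_of Gam X) X.
Proof.
rewrite a2_fun; apply: differentiable_sum => i; apply: differentiable_sum => k.
apply: differentiableM; exact: ent_diff.
Qed.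

Lemma a1_derive Gam X v : 'D_v (fun X => a1_of Gam X) X = \tr (Gam *m v).
Proof.
rewrite a1_fun derive_sum; last by move=> i; exact/diff_derivable/ent_diff.
by apply: eq_bigr => i _; rewrite ent_derive.
Qed.

Lemma a2_derive Gam X v : 'D_v (fun X => a2_of Gam X) X =
   2 * \tr ((Gam *m X) *m (Gam *m v)).
Proof.
rewrite a2_fun derive_sum; last first.
  move=> i; apply/diff_derivable/differentiable_sum => k.
  apply: differentiableM; exact: ent_diff.
have Hd : forall i k, derivable (fun X : 'M[R]_2 => (Gam *m X) i k) X v.
  by move=> i k; exact/diff_derivable/ent_diff.
have H1 : forall i, 'D_v (\sum_(k < 2) ((fun X : 'M[R]_2 => (Gam *m X) i k) *
                            (fun X : 'M[R]_2 => (Gam *m X) k i))) X =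
   \sum_(k < 2) ((Gam *m X) i k * (Gam *m v) k i + (Gam *m X) k i * (Gam *m v) i k).
  move=> i; rewrite derive_sum; last by move=> k; apply: derivableM.
  by apply: eq_bigr => k _; rewrite deriveM // !ent_derive.
under eq_bigr => i _ do rewrite H1.
under eq_bigr => i _ do rewrite big_split /=.
rewrite big_split /=.
rewrite [X in _ + X]exchange_big /=.
rewrite /mxtrace mulr2n mulrDl mul1r; congr (_ + _);
  apply: eq_bigr => i _; rewrite mxE; apply: eq_bigr => k _ //.
Qed.

Definition ee (k : nat) : 'rV[R]_3 := delta_mx 0 (inord k).

Lemma fargs_fun Gam : fargs Gam = cst (sqrtgam Gam *: ee 0)
   + (fun X => a1_of Gam X *: ee 1) + (fun X => a2_of Gam X *: ee 2).
Proof.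
apply/funext => X; apply/rowP => k; rewrite !mxE.
case: k => [[|[|[|//]]] Hk] /=.
all: by rewrite -!val_eqE /= !inordK //= ?mulr1 ?mulr0 ?addr0 ?add0r.
Qed.

Lemma fargs_diff Gam X : differentiable (fargs Gam) X.
Proof.
rewrite fargs_fun; apply: differentiableD; [apply: differentiableD|].
- exact: differentiable_cst.
- exact/differentiableZl/a1_diff.
- exact/differentiableZl/a2_diff.
Qed.

Lemma fargs_d Gam X v : 'd (fargs Gam) X v = \tr (Gam *m v) *: ee 1
    + (2 * \tr ((Gam *m X) *m (Gam *m v))) *: ee 2.
Proof.
  rewrite -deriveE; last exact: fargs_diff.
  rewrite derive_mx; last exact/diff_derivable/fargs_diff.
  apply/rowP => k; rewrite !mxE.
  case: k => [[|[|[|//]]] Hk] /=.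
  all: rewrite -!val_eqE /= !inordK //= ?mulr1 ?mulr0 ?addr0 ?add0r.
  - rewrite (_ : (fun t : 'M[R]_2 => _) = cst (sqrtgam Gam)) ?derive_cst //.
    by apply/funext => t; rewrite mxE.
  - rewrite (_ : (fun t : 'M[R]_2 => _) = (fun t => a1_of Gam t)) ?a1_derive //.
    by apply/funext => t; rewrite mxE.
  - rewrite (_ : (fun t : 'M[R]_2 => _) = (fun t => a2_of Gam t)) ?a2_derive //.
    by apply/funext => t; rewrite mxE.
Qed.

Lemma Lag_derive f Gam X v : (forall p, differentiable f p) ->
  'D_v (Lag f Gam) X = pder f (inord 1) (fargs Gam X) * \tr (Gam *m v)
    + pder f (inord 2) (fargs Gam X) * (2 * \tr ((Gam *m X) *m (Gam *m v))).
Proof.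
move=> df.
rewrite (_ : Lag f Gam = f \o fargs Gam) //.
rewrite deriveE; last exact/differentiable_comp/df/fargs_diff.
rewrite diff_comp //; last exact: fargs_diff.
rewrite /comp fargs_d linearD !linearZ /=.
rewrite /pder /ee !deriveE //.
have E : forall (a b c d : R), c *: a + d *: b = a * c + b * d.
  by move=> a b c d; rewrite /GRing.scale /= mulrC [d * _]mulrC.
exact: E.
Qed.

Lemma tr_delta (A : 'M[R]_2) i j : \tr (A *m delta_mx i j) = A j i.
Proof.
rewrite /mxtrace (bigD1 j) //= big1 ?addr0; last first.
  move=> k /negbTE kj; rewrite mxE big1 // => l _; rewrite mxE kj andbF mulr0 //.
rewrite mxE (bigD1 i) //= big1 ?addr0; last first.
  by move=> l /negbTE li; rewrite mxE li mulr0.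
by rewrite mxE !eqxx mulr1.
Qed.
End H.

Theorem mainTheorem6 (R : realType) (f : 'rV[R]_3 -> R) (Gam H : 'M[R]_2) :
  (* f continuously differentiable *)
  (forall p, differentiable f p) ->
  (forall k : 'I_3, continuous (pder f k)) ->
  (* gamma_{ab}, h_{ab} real symmetric invertible *)
  Gam^T = Gam -> Gam \in unitmx ->
  H^T = H -> H \in unitmx ->
  (* stationarity: dL/dh^{ij} = 0 for all i, j, at h^{ab} = H^{-1} *)
  (forall i j : 'I_2, 'D_(delta_mx i j) (Lag f Gam) (invmx H) = 0) ->
  pder f (inord 1) (fargs Gam (invmx H)) != 0 ->
  let f1 := pder f (inord 1) (fargs Gam (invmx H)) in
  let f2 := pder f (inord 2) (fargs Gam (invmx H)) in
  let phi := - 2 * f2 / f1 in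
  [/\ f2 != 0,
      H = phi *: Gam,
      a1_of Gam (invmx H) = 2 * phi^-1
    & a2_of Gam (invmx H) = 2 * phi^-2].
Proof.
move=> df _ _ uG _ uH hst hf1 f1 f2 phi.
have hf1' : f1 != 0 by [].
set X := invmx H in hst |- *.
have key : f1 *: Gam + (2 * f2) *: (Gam *m X *m Gam) = 0.
  apply/matrixP => a b; have := hst b a.
  rewrite Lag_derive // mulmxA !tr_delta => E.
  rewrite !mxE [2 * f2]mulrC -mulrA.
  by move: E; rewrite !mxE.
have f2n0 : f2 != 0.
  apply/eqP => f20; move: key; rewrite f20 mulr0 scale0r addr0 => /eqP.
  rewrite scaler_eq0 (negbTE hf1') /= => /eqP G0.
  by move: uG; rewrite G0 unitmxE det0 unitr0.
have two2 : (2 : R) * f2 != 0 by rewrite mulf_neq0 // pnatr_eq0.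
set c := - f1 / (2 * f2).
have c0 : c != 0 by rewrite /c mulf_neq0 ?oppr_eq0 ?invr_eq0.
have M : Gam *m X *m Gam = c *: Gam.
  have E : (2 * f2) *: (Gam *m X *m Gam) = (- f1) *: Gam.
    by apply/eqP; rewrite scaleNr -addr_eq0 addrC key.
  rewrite -[LHS]scale1r -(mulVf two2) -scalerA E scalerA /c.
  by rewrite mulrC.
have XG : X *m Gam = c%:M.
  rewrite -[X *m Gam]mul1mx -(mulVmx uG) -mulmxA [Gam *m (X *m Gam)]mulmxA M.
  by rewrite -scalemxAr (mulVmx uG) scalemx1.
have GX : Gam *m X = c%:M.
  rewrite -[Gam *m X]mulmx1 -(mulmxV uG) mulmxA M.
  by rewrite -scalemxAl (mulmxV uG) scalemx1.
have phic : phi = c^-1.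
  by rewrite /phi /c invf_div invrN !mulNr mulrN.
split => //.
- have := mulmxV uH; rewrite -/X => HX.
  have : H *m (X *m Gam) = Gam by rewrite mulmxA HX mul1mx.
  rewrite XG mul_mx_scalar => <-.
  by rewrite scalerA phic mulVf // scale1r.
- by rewrite /a1_of GX mxtrace_scalar phic invrK mulr_natl.
- rewrite /a2_of GX -scalar_mxM mxtrace_scalar phic.
  by rewrite exprVn invrK expr2 mulr_natl.
Qed.
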